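(* Let $X$ be a complex Hilbert space, $T\in\mathbb Z^+$, and $\mathcal A$ a bounded linear operator on $X^T$. \begin{enumerate} \item The harmonic resolvent set $\rho_T(\mathcal A)$ is open and contains a neighbourhood of the origin; in particular it is nonempty. \item If $\mathcal A=\mathcal T_T(A)$ for some $T$-periodic sequence $(A_t)_{t\in\mathbb Z}$ of bounded linear operators on $X$, then $e^{2\pi j/T}\rho_T(\mathcal A)=\rho_T(\mathcal A)$. \end{enumerate}
   Context: $j$ denotes the imaginary unit. $\mathcal N_T:=\mathrm{diag}(\epsilon^kI_X)_{k=0}^{T-1}$ on $X^T$ with $\epsilon:=e^{2\pi j/T}$. The harmonic resolvent set is $\rho_T(\mathcal A):=\{z\in\mathbb C: \mathcal N_T-z\mathcal A \text{ has a bounded inverse}\}$. For a $T$-periodic sequence $A_t$ of bounded operators on $X$, its Fourier coefficients are $\widehat A_k:=\frac1T\sum_{t=0}^{T-1}A_te^{-2\pi jtk/T}$ (so $A_t=\sum_{k=0}^{T-1}\widehat A_ke^{2\pi jtk/T}$), and its Toeplitz transform $\mathcal T_T(A)$ is the $T\times T$ block operator matrix on $X^T$ whose entry in row $r$ and column $\ell$ ($0\le r,\ell<T$) is $\widehat A_{(r-\ell)\bmod T}$. *)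

(* Defs.v *)
From mathcomp Require Import all_boot all_algebra.
From mathcomp Require Import all_classical all_reals all_analysis.
From mathcomp Require Export complex.
Export GRing.Theory Num.Theory.
Export numFieldNormedType.Exports.

Set Implicit Arguments.
Unset Strict Implicit.
Unset Printing Implicit Defensive.

Local Open Scope ring_scope.
Local Open Scope complex_scope.

Definition C (R : realType) : numClosedFieldType := R[i].

Definition expi (R : realType) (theta : R) : C R := Complex (cos theta) (sin theta).

Definition epsT (R : realType) (T : nat) : C R := expi (2 * pi / T%:R).

(* X is a complex Hilbert space: a complete normed C-module whose norm
   comes from an inner product ip (linear in the first argument,
   conjugate symmetric, <x,x> = |x|^2). *)
Definition is_inner_product (R : realType) (X : normedModType (C R))
    (ip : X -> X -> C R) : Prop :=
  (forall (a : C R) (x y z : X), ip (a *: x + y) z = a * ip x z + ip y z) /\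
  (forall x y : X, ip x y = (ip y x)^*) /\
  (forall x : X, ip x x = `|x| ^+ 2).

Definition bounded_linear_X (R : realType) (X : normedModType (C R))
    (f : X -> X) : Prop :=
  (forall (a : C R) (x y : X), f (a *: x + y) = a *: f x + f y) /\
  (exists M : C R, forall x : X, `|f x| <= M * `|x|).

Definition vecT (R : realType) (X : normedModType (C R)) (T : nat) :=
  {ffun 'I_T -> X}.

Definition normT (R : realType) (X : normedModType (C R)) (T : nat)
    (v : vecT X T) : C R :=
  sqrtC (\sum_(i < T) `|v i| ^+ 2).

Definition bounded_linear_T (R : realType) (X : normedModType (C R)) (T : nat)
    (f : vecT X T -> vecT X T) : Prop :=
  (forall (a : C R) (u v : vecT X T), f (a *: u + v) = a *: f u + f v) /\
  (exists M : C R, forall v : vecT X T, normT (f v) <= M * normT v).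

Definition has_bounded_inverse (R : realType) (X : normedModType (C R)) (T : nat)
    (L : vecT X T -> vecT X T) : Prop :=
  exists Linv : vecT X T -> vecT X T,
    bounded_linear_T Linv /\
    (forall v, Linv (L v) = v) /\ (forall v, L (Linv v) = v).

Definition NT (R : realType) (X : normedModType (C R)) (T : nat)
    (v : vecT X T) : vecT X T :=
  [ffun k : 'I_T => epsT R T ^+ k *: v k].

Definition harm_resolvent (R : realType) (X : normedModType (C R)) (T : nat)
    (A : vecT X T -> vecT X T) : set (C R) :=
  [set z : C R | has_bounded_inverse (fun v => NT v - z *: A v)].

Definition fourier_coef (R : realType) (X : normedModType (C R)) (T : nat)
    (A : int -> X -> X) (k : nat) (x : X) : X :=
  (T%:R : C R)^-1 *:
    \sum_(t < T) expi (- (2 * pi * t%:R * k%:R / T%:R)) *: A (t%:Z) x.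

(* Toeplitz transform: entry (r, l) is hat A_{(r - l) mod T}. *)
Definition toeplitz (R : realType) (X : normedModType (C R)) (T : nat)
    (A : int -> X -> X) (v : vecT X T) : vecT X T :=
  [ffun r : 'I_T =>
     \sum_(l < T) fourier_coef T A ((r + (T - l)) %% T)%N (v l)].

Arguments toeplitz {R X} T A v.
Arguments harm_resolvent {R X T} A _.

(* Main.v *)
Require Import Defs.
From mathcomp Require Import all_boot all_algebra.
From mathcomp Require Import all_classical all_reals all_analysis.
From mathcomp Require Import complex.
From mathcomp Require Import zify.
Import GRing.Theory Num.Theory.
Import numFieldNormedType.Exports.
Import order.Order.TTheory.
Local Open Scope ring_scope.
Local Open Scope classical_set_scope.

Section Geo.
Variable R : realType.
Local Notation K := (C R).
Implicit Types x : K.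

Lemma ge0_realC (x : K) : 0 <= x -> x = ((complex.Re x)%:C)%C.
Proof.
have : forall y : R[i], 0 <= y -> y = ((complex.Re y)%:C)%C.
  case=> a b; rewrite lecE /= => /andP[/eqP -> _] //.
by apply.
Qed.

Lemma geo_small (c e : K) : 0 <= c -> 0 < e ->
  exists n : nat, (2^-1 : K) ^+ n * c < e.
Proof.
move=> c0 e0.
have := c0; rewrite [_ <= _]lecE /= => /andP[_ c0'].
have := e0; rewrite [_ < _]ltcE /= => /andP[_ e0'].
set c' := complex.Re c in c0'; set e' := complex.Re e in e0'.
have h2 : `|(2^-1 : R)| < 1.
  by rewrite ger0_norm ?invr_ge0 ?ler0n // invf_lt1 ?ltr1n.
have := cvg_expr h2; move/cvgr_dist_lt => /(_ (e' / (c' + 1))).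
have pos : 0 < e' / (c' + 1) by rewrite divr_gt0 // ltr_wpDl.
case/(_ pos) => N _ HN.
exists N.
have := HN N (leqnn N); rewrite /= sub0r normrN ger0_norm ?exprn_ge0 ?invr_ge0 ?ler0n //.
move=> hN.
rewrite (ge0_realC _ c0) (ge0_realC _ (ltW e0)) -/c' -/e'.
have -> : (2^-1 : K) ^+ N * ((c')%:C)%C = ((2^-1 ^+ N * c')%:C)%C.
  by rewrite rmorphM rmorphXn fmorphV rmorph_nat.
rewrite ltcR.
have c1 : 0 < c' + 1 by apply: ltr_wpDl c0' ltr01.
have h3 : 2^-1 ^+ N * (c' + 1) < e' by rewrite -ltr_pdivlMr.
apply: le_lt_trans h3; rewrite ler_wpM2l ?exprn_ge0 ?invr_ge0 ?ler0n //.
by rewrite lerDl ler01.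
Qed.
End Geo.
Arguments geo_small {R c e}.
Arguments ge0_realC {R x}.

Section Lim.
Variable R : realType.
Local Notation K := (C R).
Variable X : completeNormedModType K.

Lemma zero_of_geo (x : X) (c : K) : 0 <= c ->
  (forall n, `|x| <= (2^-1 : K) ^+ n * c) -> x = 0.
Proof.
move=> c0 h; apply/eqP; rewrite -normr_le0; apply/ler_addgt0Pr => e e0.
rewrite add0r; have [n hn] := geo_small c0 e0.
exact: le_trans (h n) (ltW hn).
Qed.

Lemma geo_lim (u : nat -> X) (c : K) : 0 <= c ->
  (forall n m, (n <= m)%N -> `|u m - u n| <= (2^-1 : K) ^+ n * c) ->
  forall n, `|lim (u @ \oo) - u n| <= (2^-1 : K) ^+ n * c.
Proof.
move=> c0 h.
have cv : cvg (u @ \oo).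
  apply/cauchy_cvgP; apply/cauchyP => e e0.
  have [n hn] := geo_small c0 e0.
  exists (u n); exists n => // m /= nm.
  rewrite -ball_normE /= distrC; exact: le_lt_trans (h n m nm) hn.
move=> n; apply/ler_addgt0Pr => e e0.
have [N _ HN] := cvgr_dist_lt _ _ cv _ e0.
have hm := HN (maxn n N) (leq_maxr n N).
rewrite [_ + e]addrC; apply: le_trans (ler_distD (u (maxn n N)) _ _) _.
by apply: lerD; [exact: ltW | exact: h (leq_maxl n N)].
Qed.
End Lim.

Section NormT.
Variable R : realType.
Local Notation K := (C R).
Variable X : normedModType K.
Variable T : nat.
Implicit Types (v : vecT X T).

Lemma normT_ge0 v : 0 <= normT v.
Proof. by rewrite /normT sqrtC_ge0 sumr_ge0 // => i _; rewrite exprn_ge0. Qed.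

Lemma coord_le v i : `|v i| <= normT v.
Proof.
rewrite /normT -(sqrCK (normr_ge0 (v i))) ler_sqrtC ?nnegrE ?exprn_ge0 //;
  last by rewrite sumr_ge0 // => j _; rewrite exprn_ge0.
rewrite (bigD1 i) //= lerDl sumr_ge0 // => j _; rewrite exprn_ge0 //.
Qed.

Lemma normT_bound v (b : K) : 0 <= b -> (forall i, `|v i| <= b) ->
  normT v <= T%:R * b.
Proof.
move=> b0 hb.
have Tb0 : 0 <= T%:R * b by rewrite mulr_ge0 ?ler0n.
rewrite /normT -(sqrCK Tb0) ler_sqrtC ?nnegrE ?exprn_ge0 //;
  last by rewrite sumr_ge0 // => j _; rewrite exprn_ge0.
apply: (@le_trans _ _ (\sum_(i < T) b ^+ 2)).
  by apply: ler_sum => i _; rewrite lerXn2r ?nnegrE.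
rewrite sumr_const card_ord exprMn -[b ^+ 2 *+ T]mulr_natl.
apply: ler_wpM2r; first by rewrite exprn_ge0.
rewrite -natrX ler_nat; case: T => // n; by rewrite -mulnn leq_pmull.
Qed.

Lemma normTZ (a : K) v : normT (a *: v) = `|a| * normT v.
Proof.
rewrite /normT.
under eq_bigr => i _ do rewrite ffunE normrZ exprMn.
rewrite -mulr_sumr sqrtCM ?nnegrE ?exprn_ge0 ?sqrCK //.
by rewrite sumr_ge0 // => j _; rewrite exprn_ge0.
Qed.

Lemma normT_diag (c : 'I_T -> K) v : (forall i, `|c i| = 1) ->
  normT [ffun i => c i *: v i] = normT v.
Proof.
move=> hc; rewrite /normT; congr sqrtC; apply: eq_bigr => i _.
by rewrite ffunE normrZ hc mul1r.
Qed.

Lemma normT_perm (f : 'I_T -> 'I_T) v : injective f ->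
  normT [ffun i => v (f i)] = normT v.
Proof.
move=> hf; rewrite /normT; congr sqrtC.
rewrite [RHS](reindex_inj hf); apply: eq_bigr => i _; by rewrite ffunE.
Qed.
End NormT.
Arguments normT_ge0 {R X T}.
Arguments coord_le {R X T}.
Arguments normT_bound {R X T}.
Arguments normTZ {R X T}.
Arguments normT_diag {R X T}.
Arguments normT_perm {R X T}.

Section Lin.
Variable R : realType.
Local Notation K := (C R).
Variable X : normedModType K.
Variable T : nat.
Local Notation V := (vecT X T).

Definition islin (f : V -> V) := forall (a : K) (u v : V), f (a *: u + v) = a *: f u + f v.

Variable f : V -> V.
Hypothesis hf : islin f.

Lemma lin0 : f 0 = 0.
Proof.
have h := hf 1 0 0; rewrite !scale1r addr0 in h.
by apply: (addrI (f 0)); rewrite addr0 -h.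
Qed.

Lemma linZ a u : f (a *: u) = a *: f u.
Proof. by have := hf a u 0; rewrite !addr0 lin0 addr0. Qed.

Lemma linD u v : f (u + v) = f u + f v.
Proof. by have := hf 1 u v; rewrite !scale1r. Qed.

Lemma linN u : f (- u) = - f u.
Proof. by rewrite -scaleN1r linZ scaleN1r. Qed.

Lemma linB u v : f (u - v) = f u - f v.
Proof. by rewrite linD linN. Qed.

Lemma lin_sum (I : Type) (r : seq I) (F : I -> V) :
  f (\sum_(k <- r) F k) = \sum_(k <- r) f (F k).
Proof.
elim: r => [|x r IH]; first by rewrite !big_nil lin0.
by rewrite !big_cons linD IH.
Qed.
End Lin.
Arguments islin {R X T}.
Arguments lin0 {R X T f}.
Arguments linZ {R X T f}.
Arguments linD {R X T f}.
Arguments linN {R X T f}.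
Arguments linB {R X T f}.
Arguments lin_sum {R X T f}.

Lemma islin_comp (R : realType) (X : normedModType (C R)) (T : nat) (f g : vecT X T -> vecT X T) :
  islin f -> islin g -> islin (fun v => f (g v)).
Proof. by move=> hf hg a u v; rewrite hg hf. Qed.

Lemma islin_iter (R : realType) (X : normedModType (C R)) (T : nat) (f : vecT X T -> vecT X T) k :
  islin f -> islin (iter k f).
Proof.
move=> hf; elim: k => [|k IH] a u v //=.
by rewrite IH hf.
Qed.
Arguments islin_iter {R X T f}.
Arguments islin_comp {R X T f g}.

Lemma zid (W : zmodType) (x y z s t : W) :
  x - (y + z) = (x - (s + t)) - ((y - s) + (z - t)).
Proof. by rewrite (opprD (y - s)) !opprB [(s - y) + _]addrACA -opprD addrA subrK. Qed.

Lemma zid2 (W : zmodType) (x y z : W) : x - y = (x - (y - z)) - z.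
Proof. by rewrite opprB addrA addrAC addrK. Qed.

Lemma zid3 (W : zmodType) (x a b c d : W) : x - a - ((b - c) + d) = x - b - (a - c) - d.
Proof. by rewrite opprD addrA; congr (_ - d); rewrite !opprB !addrA addrAC [RHS]addrAC [x - a - b]addrAC. Qed.

Section Neumann.
Variable R : realType.
Local Notation K := (C R).
Variable X : completeNormedModType K.
Variable T : nat.
Local Notation V := (vecT X T).
Variable B : V -> V.
Hypothesis hBl : islin B.
Hypothesis hB : forall v, normT (B v) <= 2^-1 * normT v.
Local Notation q := (2^-1 : K).

Lemma q_ge0 : 0 <= q.
Proof. by rewrite invr_ge0 ler0n. Qed.

Lemma Bk_norm k v : normT (iter k B v) <= q ^+ k * normT v.
Proof.
elim: k => [|k IH] /=; first by rewrite expr0 mul1r.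
apply: le_trans (hB _) _; rewrite exprS -mulrA ler_wpM2l //; exact: q_ge0.
Qed.

Definition S n v : V := \sum_(0 <= k < n) iter k B v.

Lemma geo_tail n d : \sum_(n <= k < n + d) q ^+ k + 2 * q ^+ (n + d) = 2 * q ^+ n.
Proof.
elim: d => [|d IH]; first by rewrite addn0 big_geq // add0r.
rewrite addnS big_nat_recr ?leq_addr //= -addrA -IH; congr (_ + _).
by rewrite exprS mulrA mulfV ?pnatr_eq0 // mul1r mulr_natl mulr2n.
Qed.

Lemma S_tail v i n m : (n <= m)%N -> `|S m v i - S n v i| <= q ^+ n * (2 * normT v).
Proof.
move=> nm; rewrite /S (big_cat_nat (leq0n n) nm) /= ffunE addrAC subrr add0r sum_ffunE.
apply: le_trans (ler_norm_sum _ _ _) _.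
apply: (@le_trans _ _ (\sum_(n <= k < m) q ^+ k * normT v)).
  by apply: ler_sum => k _; apply: le_trans (coord_le _ i) (Bk_norm k v).
rewrite -mulr_suml mulrA [q ^+ n * 2]mulrC.
have [d ->] : exists d, m = (n + d)%N by exists (m - n)%N; rewrite subnKC.
by rewrite -(geo_tail n d) ler_wpM2r ?normT_ge0 // lerDl mulr_ge0 ?ler0n ?exprn_ge0.
Qed.

Definition Linv v : V := [ffun i => lim ((fun n => S n v i) @ \oo)].

Lemma Linv_near v i n : `|Linv v i - S n v i| <= q ^+ n * (2 * normT v).
Proof.
rewrite ffunE; apply: (@geo_lim R X (fun n => S n v i)).
  by rewrite mulr_ge0 ?ler0n ?normT_ge0.
by move=> k m km; apply: S_tail.
Qed.

Lemma S_lin n : islin (S n).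
Proof.
move=> a u v; rewrite /S scaler_sumr -big_split /=; apply: eq_bigr => k _.
by rewrite (islin_iter k hBl).
Qed.

Lemma tele n v : \sum_(0 <= k < n) (iter k B v - iter k.+1 B v) = v - iter n B v.
Proof.
rewrite -[RHS]opprB -(telescope_sumr (fun k => iter k B v) (leq0n n)) -sumrN.
by apply: eq_bigr => k _ /=; rewrite opprB.
Qed.

Lemma S_tele n v : S n v - B (S n v) = v - iter n B v.
Proof. by rewrite /S (lin_sum hBl) -sumrB tele. Qed.

Lemma S_tele' n v : S n (v - B v) = v - iter n B v.
Proof.
rewrite /S -tele; apply: eq_bigr => k _.
by rewrite (linB (islin_iter k hBl)) -iterSr.
Qed.


Lemma S0 v : S 0 v = 0.
Proof. by rewrite /S big_geq. Qed.

Lemma Linv_bounded v : normT (Linv v) <= (T%:R * 2) * normT v.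
Proof.
rewrite -mulrA; apply: normT_bound; first by rewrite mulr_ge0 ?ler0n ?normT_ge0.
move=> i; have := Linv_near v i 0; rewrite S0.
have -> : (0 : V) i = 0 by rewrite ffunE.
by rewrite subr0 expr0 mul1r.
Qed.

Lemma Linv_lin : islin Linv.
Proof.
move=> a u v; apply/ffunP => i; apply/eqP; rewrite -subr_eq0; apply/eqP.
apply: (@zero_of_geo R X _ (2 * normT (a *: u + v) + `|a| * (2 * normT u) + 2 * normT v)).
  by rewrite !addr_ge0 ?mulr_ge0 ?ler0n ?normT_ge0.
move=> n.
have -> : (a *: Linv u + Linv v) i = a *: Linv u i + Linv v i by rewrite !ffunE.
rewrite (zid _ _ _ _ (a *: S n u i) (S n v i)).
have -> : a *: S n u i + S n v i = S n (a *: u + v) i by rewrite S_lin !ffunE.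
rewrite -scalerBr.
apply: le_trans (ler_normB _ _) _.
rewrite -addrA !mulrDr; apply: lerD; first by apply: Linv_near.
apply: le_trans (ler_normD _ _) _; apply: lerD; last by apply: Linv_near.
by rewrite normrZ mulrCA ler_wpM2l // Linv_near.
Qed.

Lemma Linv_left v : Linv (v - B v) = v.
Proof.
apply/ffunP => i; apply/eqP; rewrite -subr_eq0; apply/eqP.
apply: (@zero_of_geo R X _ (2 * normT (v - B v) + normT v)).
  by rewrite !addr_ge0 ?mulr_ge0 ?ler0n ?normT_ge0.
move=> n.
have -> : Linv (v - B v) i - v i = (Linv (v - B v) i - S n (v - B v) i) - (iter n B v) i.
  rewrite S_tele'; have -> : (v - iter n B v) i = v i - iter n B v i by rewrite !ffunE.
  exact: zid2.
apply: le_trans (ler_normB _ _) _.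
rewrite mulrDr; apply: lerD; first by apply: Linv_near.
exact: le_trans (coord_le _ i) (Bk_norm n v).
Qed.

Lemma Linv_right v : Linv v - B (Linv v) = v.
Proof.
apply/ffunP => i; apply/eqP; rewrite -subr_eq0; apply/eqP.
apply: (@zero_of_geo R X _ (2 * normT v + T%:R * (2 * normT v) + normT v)).
  by rewrite !addr_ge0 ?mulr_ge0 ?ler0n ?normT_ge0.
move=> n.
set w := Linv v; set s := S n v.
have -> : (w - B w) i - v i = ((w - s) i - (B (w - s)) i) - (iter n B v) i.
  have := S_tele n v; rewrite -/s => /(congr1 (fun f : V => f i)) E.
  rewrite (linB hBl) !ffunE in E *.
  rewrite -[v i](subrK (iter n B v i)) -E; exact: zid3.
have ws : forall j, `|(w - s) j| <= q ^+ n * (2 * normT v).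
  move=> j; have -> : (w - s) j = w j - s j by rewrite !ffunE.
  exact: Linv_near.
apply: le_trans (ler_normB _ _) _; rewrite !mulrDr; apply: lerD; last first.
  exact: le_trans (coord_le _ i) (Bk_norm n v).
apply: le_trans (ler_normB _ _) _; apply: lerD; first exact: ws.
apply: le_trans (coord_le _ i) _; apply: le_trans (hB _) _.
have h0 : 0 <= q ^+ n * (2 * normT v) by rewrite mulr_ge0 ?exprn_ge0 ?q_ge0 // mulr_ge0 ?ler0n ?normT_ge0.
apply: le_trans (_ : _ <= normT (w - s)) _.
  by rewrite ler_piMl ?normT_ge0 // invf_le1 ?ler1n ?ltr0n.
by rewrite mulrCA; apply: normT_bound.
Qed.

Lemma neumann : has_bounded_inverse (fun v => v - B v).
Proof.
exists Linv; split; last by split; [exact: Linv_left | exact: Linv_right].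
split; first exact: Linv_lin.
by exists (T%:R * 2); apply: Linv_bounded.
Qed.
End Neumann.
Arguments neumann {R X T B}.

Section E.
Variable R : realType.
Local Notation K := (C R).

Lemma norm_expi (t : R) : `|expi t| = 1.
Proof.
have : forall y : R[i], complex.Re y = cos t -> complex.Im y = sin t -> `|y| = 1.
  by move=> y h1 h2; rewrite normc_def h1 h2 cos2Dsin2 sqrtr1.
by apply.
Qed.

Lemma expiD (a b : R) : expi a * expi b = expi (a + b).
Proof.
rewrite /expi cosD sinD.
have : forall (x y : R[i]), x = Complex (cos a) (sin a) -> y = Complex (cos b) (sin b) ->
  x * y = Complex (cos a * cos b - sin a * sin b) (sin a * cos b + cos a * sin b).
  by move=> x y -> ->; simpc; rewrite [sin a * _ + _]addrC.
by move=> h; exact: (h _ _ erefl erefl).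
Qed.

Lemma expiX (a : R) n : expi a ^+ n = expi (a *+ n).
Proof.
elim: n => [|n IH].
  rewrite expr0 mulr0n /expi cos0 sin0. done.
by rewrite exprS IH expiD mulrS.
Qed.

Lemma epsT_T (T : nat) : (0 < T)%N -> epsT R T ^+ T = 1.
Proof.
move=> hT; rewrite /epsT expiX -(mulr_natr (2 * pi / T%:R)) divfK ?pnatr_eq0 -?lt0n //.
by rewrite mulr_natl /expi cos2pi sin2pi.
Qed.

Lemma epsT_neq0 (T : nat) : epsT R T != 0.
Proof. by rewrite -normr_eq0 /epsT norm_expi oner_eq0. Qed.

Lemma norm_epsX (T k : nat) : `|epsT R T ^+ k| = 1.
Proof. by rewrite normrX /epsT norm_expi expr1n. Qed.
End E.

Arguments norm_expi {R}.
Arguments epsT_T {R T}.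
Arguments epsT_neq0 {R T}.
Arguments norm_epsX {R T}.

Section Part1.
Variable R : realType.
Local Notation K := (C R).
Variable X : completeNormedModType K.
Variable T : nat.
Local Notation V := (vecT X T).

Lemma bl_pos (f : V -> V) : (exists M : K, forall v, normT (f v) <= M * normT v) ->
  exists M : K, 0 <= M /\ forall v, normT (f v) <= M * normT v.
Proof.
case=> M hM; exists `|M|; split => // v.
have h := hM v.
have h0 : 0 <= M * normT v := le_trans (normT_ge0 _) h.
by rewrite -(ger0_norm (normT_ge0 v)) -normrM ger0_norm.
Qed.

Lemma NT_lin : islin (@NT R X T).
Proof.
move=> a u v; apply/ffunP => k; rewrite !ffunE scalerDr !scalerA.
by rewrite mulrC.
Qed.

Lemma F_lin (A : V -> V) (z : K) : islin A -> islin (fun v => NT v - z *: A v).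
Proof.
move=> hA a u v /=; rewrite NT_lin hA scalerDr !scalerA mulrC -scalerA.
by rewrite scalerBr opprD addrACA.
Qed.

Lemma N_inv (A : V -> V) : has_bounded_inverse (fun v => NT v - 0 *: A v).
Proof.
exists (fun v => [ffun k : 'I_T => (epsT R T ^+ k)^-1 *: v k]).
split; [split|split].
- move=> a u v; apply/ffunP => k; rewrite !ffunE scalerDr !scalerA.
  by rewrite mulrC.
- exists 1 => v; rewrite mul1r normT_diag // => i.
  by rewrite normfV norm_epsX invr1.
- move=> v; apply/ffunP => k; rewrite scale0r subr0 !ffunE scalerA mulVf //.
  + by rewrite scale1r.
  + by rewrite expf_neq0 // epsT_neq0.
- move=> v; apply/ffunP => k; rewrite scale0r subr0 !ffunE scalerA mulfV //.
  + by rewrite scale1r.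
  + by rewrite expf_neq0 // epsT_neq0.
Qed.

Lemma res_nbhs (A : V -> V) (hA : bounded_linear_T A) (z : K) :
  harm_resolvent A z ->
  exists2 e : K, 0 < e & forall w, `|z - w| < e -> harm_resolvent A w.
Proof.
case: hA => hAl /bl_pos [MA [MA0 hMA]].
rewrite /harm_resolvent /=.
case=> L [[hLl /bl_pos [ML [ML0 hML]]] [hL1 hL2]].
have MM : 0 < ML * MA + 1 by apply: ltr_wpDl (mulr_ge0 ML0 MA0) ltr01.
have h2 : 0 < (2^-1 : K) by rewrite invr_gt0 ltr0n.
exists (2^-1 / (ML * MA + 1)); first by rewrite divr_gt0.
move=> w hw.
pose B v := (w - z) *: L (A v).
have hBl : islin B.
  by move=> a u v; rewrite /B hAl hLl scalerDr scalerA [in RHS]scalerA mulrC.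
have hB : forall v, normT (B v) <= 2^-1 * normT v.
  move=> v; rewrite /B normTZ.
  apply: (@le_trans _ _ (`|w - z| * (ML * (MA * normT v)))).
    apply: ler_wpM2l => //; apply: le_trans (hML _) _.
    by apply: ler_wpM2l => //; apply: hMA.
  rewrite mulrA mulrA; apply: ler_wpM2r; first exact: normT_ge0.
  apply: (@le_trans _ _ (2^-1 / (ML * MA + 1) * (ML * MA))).
    apply: ler_wpM2r; [exact: mulr_ge0 | rewrite distrC; exact: ltW].
  rewrite -mulrA ler_piMr ?ltW //.
  by rewrite mulrC ltr_pdivrMr // mul1r ltrDl ltr01.
have [J [[hJl hJb] [hJ1 hJ2]]] := neumann hBl hB.
have hF := F_lin A z hAl.
have FB : forall u, NT u - w *: A u = (fun v => NT v - z *: A v) (u - B u).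
  move=> u; rewrite (linB hF) /B (linZ hF) /= hL2.
  by rewrite scalerBl opprB addrA subrK.
exists (fun v => J (L v)); split; [split|split].
- exact: islin_comp hJl hLl.
- have [MJ [MJ0 hMJ]] := bl_pos _ hJb; exists (MJ * ML) => v.
  by apply: le_trans (hMJ _) _; rewrite -mulrA ler_wpM2l // hML.
- by move=> u /=; rewrite FB /= hL1 hJ1.
- by move=> v /=; rewrite FB /= hJ2 hL2.
Qed.

Lemma res_open (A : V -> V) (hA : bounded_linear_T A) :
  open (harm_resolvent A).
Proof.
rewrite openE => z hz; rewrite /interior /=.
have [e e0 he] := res_nbhs _ hA _ hz.
apply/nbhs_ballP; exists e => // w; rewrite -ball_normE /=; exact: he.
Qed.
End Part1.
Arguments bl_pos {R X T f}.
Arguments res_open {R X T A}.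
Arguments N_inv {R X T}.
Arguments res_nbhs {R X T A}.

Lemma idx_eq (T r l : nat) : (r < T)%N -> (l < T)%N ->
  ((r + (T - l.+1 %% T)) %% T = ((r + T).-1 %% T + (T - l)) %% T)%N.
Proof.
move=> rT lT; rewrite modnDml.
case: (ltngtP l.+1 T) => [h||h].
- rewrite (modn_small h).
  have -> : ((r + T).-1 + (T - l) = (r + (T - l.+1)) + T)%N by lia.
  by rewrite modnDr.
- by move=> h; lia.
- rewrite h modnn subn0.
  have -> : ((r + T).-1 + (T - l) = r + T)%N by lia.
  done.
Qed.

Section Part2.
Variable R : realType.
Local Notation K := (C R).
Variable X : completeNormedModType K.
Variable T : nat.
Hypothesis hT : (0 < T)%N.
Local Notation V := (vecT X T).
Local Notation eps := (epsT R T).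

Definition Psh (v : V) : V := [ffun k : 'I_T => v (ord_pred k)].
Definition Qsh (v : V) : V := [ffun k : 'I_T => v (ordS k)].

Lemma PQ v : Psh (Qsh v) = v.
Proof. by apply/ffunP => k; rewrite !ffunE ord_predK. Qed.

Lemma QP v : Qsh (Psh v) = v.
Proof. by apply/ffunP => k; rewrite !ffunE ordSK. Qed.

Lemma P_lin : islin Psh.
Proof. by move=> a u v; apply/ffunP => k; rewrite !ffunE. Qed.

Lemma Q_lin : islin Qsh.
Proof. by move=> a u v; apply/ffunP => k; rewrite !ffunE. Qed.

Lemma normT_Q v : normT (Qsh v) = normT v.
Proof. exact: normT_perm (@ordS_inj T). Qed.

Lemma toeP (A : int -> X -> X) u : toeplitz T A (Psh u) = Psh (toeplitz T A u).
Proof.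
apply/ffunP => r; rewrite !ffunE (reindex_inj (@ordS_inj T)) /=.
apply: eq_bigr => l _; rewrite ffunE ordSK; congr fourier_coef.
by apply: idx_eq.
Qed.

Lemma expE m : eps ^+ (m %% T) = eps ^+ m.
Proof. exact: expr_mod (epsT_T hT). Qed.

Lemma NP u : NT (Psh u) = eps *: Psh (NT u).
Proof.
apply/ffunP => k; rewrite !ffunE scalerA; congr (_ *: _).
rewrite -exprS -[RHS]expE -addn1 modnDml addn1 prednK ?addn_gt0 ?hT ?orbT //.
by rewrite modnDr expE.
Qed.

Lemma rot (A : int -> X -> X) (z : K) :
  harm_resolvent (toeplitz T A) z -> harm_resolvent (toeplitz T A) (eps * z).
Proof.
rewrite /harm_resolvent /=.
case=> L [[hLl hLb] [hL1 hL2]].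
set At := toeplitz T A.
have ID : forall u, NT (Psh u) - (eps * z) *: At (Psh u) = eps *: Psh (NT u - z *: At u).
  move=> u; rewrite /At toeP NP (linB P_lin) (linZ P_lin) scalerBr scalerA.
  done.
have ID' : forall u, NT u - (eps * z) *: At u = eps *: Psh (NT (Qsh u) - z *: At (Qsh u)).
  by move=> u; rewrite -ID PQ.
have e0 := epsT_neq0 (R := R) (T := T).
exists (fun v => Psh (L (Qsh (eps^-1 *: v)))); split; [split|split].
- move=> a u v; rewrite scalerDr scalerA mulrC -scalerA.
  by rewrite (Q_lin) hLl P_lin.
- case: (bl_pos hLb) => ML [ML0 hML]; exists ML => v.
  rewrite normT_perm; last exact: (@ord_pred_inj T).
  apply: le_trans (hML _) _; rewrite normT_Q normTZ normfV.
  by rewrite -(expr1 eps) norm_epsX invr1 mul1r.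
- move=> u /=; rewrite ID' scalerA mulVf // scale1r.
  by rewrite (QP (NT (Qsh u) - z *: At (Qsh u))) /At hL1 PQ.
- move=> v /=; rewrite ID /At hL2 (PQ (eps^-1 *: v)) scalerA mulfV // scale1r //.
Qed.

Lemma rotn (A : int -> X -> X) (z : K) n :
  harm_resolvent (toeplitz T A) z -> harm_resolvent (toeplitz T A) (eps ^+ n * z).
Proof.
move=> hz; elim: n => [|n IH]; first by rewrite expr0 mul1r.
by rewrite exprS -mulrA; apply: rot.
Qed.
End Part2.
Arguments rot {R X T} hT {A z}.
Arguments rotn {R X T} hT {A z}.

Theorem proposition6 (R : realType) (X : completeNormedModType (C R))
    (ip : X -> X -> C R) (hip : is_inner_product ip)
    (T : nat) (hT : (0 < T)%N) :
  (forall A : vecT X T -> vecT X T, bounded_linear_T A ->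
     [/\ open (harm_resolvent A),
         nbhs (0 : C R) (harm_resolvent A) &
         harm_resolvent A !=set0]) /\
  (forall A : int -> X -> X,
     (forall t, bounded_linear_X (A t)) ->
     (forall t, A (t + T%:Z)%R = A t) ->
     (fun z : C R => epsT R T * z) @` harm_resolvent (toeplitz T A)
       = harm_resolvent (toeplitz T A)).
Proof.
split.
- move=> A hA.
  have h0 : harm_resolvent A 0 by exact: N_inv.
  split; [exact: res_open hA | | by exists 0].
  by have := res_open hA; rewrite openE => /(_ 0 h0).
- move=> A _ _; apply/seteqP; split.
  + by move=> _ [z hz <-]; exact (rot hT hz).
  + move=> w hw; exists (epsT R T ^+ T.-1 * w); first exact: rotn.
    by rewrite mulrA -exprS prednK // epsT_T // mul1r.
Qed.
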